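(* Let $n\ge2$ and let $g_{nk}(y)=\sum_{p=0}^\infty y^{k+pn}/(k+pn)!$ for $k=0,\dots,n-1$. Then for every real $y$, $$\sum_{k=0}^{n-1}g_{nk}^2(y)=\frac{1}{n}\sum_{l=0}^{n-1}\exp\!\Big[2y\cos\Big(\frac{2\pi l}{n}\Big)\Big].$$ *)

(* Defs.v *)
From Stdlib Require Import Reals Factorial.
From Coquelicot Require Import Coquelicot.
Open Scope R_scope.

Definition g (n k : nat) (y : R) : R :=
  Series (fun p : nat => y ^ (k + p * n) / INR (fact (k + p * n))).

(* Main.v *)
Require Import Defs.
From Stdlib Require Import Reals.
From Stdlib Require Import Lia ZArith Lra.
From Coquelicot Require Import Coquelicot.
Open Scope R_scope.

Lemma sum_tele (f : nat -> R) m :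
  sum_f_R0 (fun l => f (S l) - f l) m = f (S m) - f O.
Proof. induction m; simpl; [ring| rewrite IHm; ring]. Qed.

Lemma sum_ext (f h : nat -> R) m : (forall l, (l <= m)%nat -> f l = h l) ->
  sum_f_R0 f m = sum_f_R0 h m.
Proof.
  induction m; intros H; simpl. apply H; lia.
  rewrite IHm by (intros; apply H; lia). rewrite H by lia. reflexivity.
Qed.

Lemma sum_scal (f : nat -> R) c m : sum_f_R0 (fun l => c * f l) m = c * sum_f_R0 f m.
Proof. induction m; simpl; [ring| rewrite IHm; ring]. Qed.

Lemma sum_plus (f h : nat -> R) m : sum_f_R0 (fun l => f l + h l) m = sum_f_R0 f m + sum_f_R0 h m.
Proof. induction m; simpl; [ring| rewrite IHm; ring]. Qed.

Lemma sum_swap (f : nat -> nat -> R) m p :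
  sum_f_R0 (fun i => sum_f_R0 (fun j => f i j) p) m =
  sum_f_R0 (fun j => sum_f_R0 (fun i => f i j) m) p.
Proof.
  induction m; simpl. reflexivity.
  rewrite IHm. rewrite <- sum_plus. reflexivity.
Qed.

Lemma cos_2PI_int (z : Z) : cos (2 * PI * IZR z) = 1.
Proof.
  destruct (Z_le_gt_dec 0 z) as [H|H].
  - rewrite <- (Z2Nat.id z H). rewrite <- INR_IZR_INZ.
    replace (2 * PI * INR (Z.to_nat z)) with (0 + 2 * INR (Z.to_nat z) * PI) by ring.
    rewrite cos_period. apply cos_0.
  - replace z with (- (- z))%Z by ring. rewrite opp_IZR.
    replace (2 * PI * - IZR (- z)) with (- (2 * PI * IZR (-z))) by ring.
    rewrite cos_neg.
    assert (H' : (0 <= - z)%Z) by lia.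
    rewrite <- (Z2Nat.id (-z) H'). rewrite <- INR_IZR_INZ.
    replace (2 * PI * INR (Z.to_nat (-z))) with (0 + 2 * INR (Z.to_nat (-z)) * PI) by ring.
    rewrite cos_period. apply cos_0.
Qed.

Lemma sin_2PI_int (z : Z) x : sin (x + 2 * PI * IZR z) = sin x.
Proof.
  destruct (Z_le_gt_dec 0 z) as [H|H].
  - rewrite <- (Z2Nat.id z H). rewrite <- INR_IZR_INZ.
    replace (x + 2 * PI * INR (Z.to_nat z)) with (x + 2 * INR (Z.to_nat z) * PI) by ring.
    apply sin_period.
  - replace z with (- (- z))%Z by ring. rewrite opp_IZR.
    assert (H' : (0 <= - z)%Z) by lia.
    rewrite <- (Z2Nat.id (-z) H'). rewrite <- INR_IZR_INZ.
    set (k := Z.to_nat (-z)).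
    rewrite <- (sin_period (x + 2 * PI * - INR k) k). f_equal. ring.
Qed.

Lemma orth_div (n : nat) (m q : Z) : (1 <= n)%nat -> m = (q * Z.of_nat n)%Z ->
  sum_f_R0 (fun l => cos (IZR m * (2 * PI * INR l / INR n))) (n - 1) = INR n.
Proof.
  intros Hn Hm.
  assert (HnR : INR n <> 0) by (apply not_0_INR; lia).
  rewrite (sum_ext _ (fun _ => 1)).
  - clear Hm. destruct n as [|n]; [lia|]. replace (S n - 1)%nat with n by lia.
    clear. induction n. simpl. ring. rewrite tech5, IHn. rewrite (S_INR (S n)). ring.
  - intros l _. subst m. rewrite mult_IZR, <- INR_IZR_INZ.
    replace (IZR q * INR n * (2 * PI * INR l / INR n)) with (2 * PI * IZR (q * Z.of_nat l))
      by (rewrite mult_IZR, <- INR_IZR_INZ; field; auto).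
    apply cos_2PI_int.
Qed.

Lemma orth_ndiv (n : nat) (m : Z) : (1 <= n)%nat -> (forall q, m <> (q * Z.of_nat n)%Z) ->
  sum_f_R0 (fun l => cos (IZR m * (2 * PI * INR l / INR n))) (n - 1) = 0.
Proof.
  intros Hn Hm.
  assert (HnR : INR n <> 0) by (apply not_0_INR; lia).
  set (x := IZR m * (2 * PI / INR n)).
  assert (Hs : sin (x / 2) <> 0).
  { intro H. apply sin_eq_0_0 in H. destruct H as [k Hk].
    apply (Hm k). unfold x in Hk. apply eq_IZR. rewrite mult_IZR, <- INR_IZR_INZ.
    assert (PI <> 0) by (generalize PI_RGT_0; lra).
    apply (Rmult_eq_reg_r (PI / INR n)); [|apply Rmult_integral_contrapositive; split; auto; apply Rinv_neq_0_compat; auto].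
    rewrite (Rmult_comm (IZR m)). replace (PI / INR n * IZR m) with (IZR m * (2 * PI / INR n) / 2) by (field; auto).
    rewrite Hk. field; auto. }
  set (f := fun l : nat => sin ((INR l - / 2) * x)).
  assert (E : forall l, 2 * sin (x / 2) * cos (IZR m * (2 * PI * INR l / INR n)) = f (S l) - f l).
  { intro l. unfold f. rewrite S_INR.
    replace (IZR m * (2 * PI * INR l / INR n)) with (INR l * x) by (unfold x; field; auto).
    replace ((INR l + 1 - / 2) * x) with (INR l * x + x / 2) by field.
    replace ((INR l - / 2) * x) with (INR l * x - x / 2) by field.
    rewrite sin_plus, sin_minus. ring. }
  apply (Rmult_eq_reg_l (2 * sin (x / 2))); [|apply Rmult_integral_contrapositive; split; auto; lra].
  rewrite <- sum_scal. rewrite (sum_ext _ (fun l => f (S l) - f l)) by (intros; apply E).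
  rewrite sum_tele. unfold f. replace (S (n - 1)) with n by lia.
  replace ((INR n - / 2) * x) with (- (x / 2) + 2 * PI * IZR m) by (unfold x; field; auto).
  rewrite sin_2PI_int. simpl INR. replace ((0 - / 2) * x) with (- (x/2)) by field. ring.
Qed.

Lemma C_nn N : Binomial.C N N = 1.
Proof. unfold Binomial.C. rewrite Nat.sub_diag. simpl fact. rewrite INR_IZR_INZ. simpl.
  field. rewrite <- INR_IZR_INZ. apply INR_fact_neq_0. Qed.
Lemma C_n0 N : Binomial.C N 0 = 1.
Proof. unfold Binomial.C. rewrite Nat.sub_0_r. simpl fact. rewrite INR_IZR_INZ. simpl.
  field. rewrite <- INR_IZR_INZ. apply INR_fact_neq_0. Qed.

Lemma cos_pow (t : R) N :
  (2 * cos t) ^ N = sum_f_R0 (fun a => Binomial.C N a * cos ((2 * INR a - INR N) * t)) N.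
Proof.
  induction N.
  - simpl. rewrite C_n0. replace ((2 * 0 - 0) * t) with 0 by ring. rewrite cos_0. ring.
  - set (h := fun a : nat => cos ((2 * INR a - INR (S N)) * t)).
    assert (K : forall a, 2 * cos t * cos ((2 * INR a - INR N) * t) = h (S a) + h a).
    { intro a. unfold h. rewrite !S_INR.
      replace ((2 * (INR a + 1) - (INR N + 1)) * t) with ((2 * INR a - INR N) * t + t) by ring.
      replace ((2 * INR a - (INR N + 1)) * t) with ((2 * INR a - INR N) * t - t) by ring.
      rewrite cos_plus, cos_minus. ring. }
    change ((2 * cos t) ^ S N) with (2 * cos t * (2 * cos t) ^ N). rewrite IHN.
    rewrite <- sum_scal.
    rewrite (sum_ext _ (fun a => Binomial.C N a * h (S a) + Binomial.C N a * h a)).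
    2:{ intros a _. rewrite <- Rmult_plus_distr_l, <- K. ring. }
    rewrite sum_plus.
    change (sum_f_R0 (fun a => Binomial.C (S N) a * cos ((2 * INR a - INR (S N)) * t)) (S N))
      with (sum_f_R0 (fun a => Binomial.C (S N) a * h a) (S N)).
    rewrite (decomp_sum (fun a => Binomial.C (S N) a * h a) (S N)) by lia. simpl pred. rewrite C_n0.
    destruct N as [|N].
    + simpl. rewrite C_n0, !C_nn. ring.
    + rewrite (sum_ext (fun i => Binomial.C (S (S N)) (S i) * h (S i))
         (fun i => Binomial.C (S N) i * h (S i) + (if Nat.ltb i (S N) then Binomial.C (S N) (S i) * h (S i) else 0))).
      2:{ intros i Hi. destruct (Nat.ltb_spec i (S N)).
          - rewrite <- pascal by lia. ring.
          - replace i with (S N) by lia. rewrite !C_nn. ring. }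
      rewrite sum_plus. rewrite (tech5 (fun i => if Nat.ltb i (S N) then _ else 0)). rewrite Nat.ltb_irrefl.
      rewrite (decomp_sum (fun a => Binomial.C (S N) a * h a)) by lia. simpl pred. rewrite C_n0.
      rewrite (sum_ext (fun i => if Nat.ltb i (S N) then _ else 0) (fun i => Binomial.C (S N) (S i) * h (S i))).
      2:{ intros i Hi. destruct (Nat.ltb_spec i (S N)); [reflexivity| lia]. }
      ring.
Qed.



Definition ak (n k j : nat) : R := if Nat.eqb (j mod n) k then / INR (fact j) else 0.

Lemma term_le_exp r j : 0 <= r -> r ^ j / INR (fact j) <= exp r.
Proof.
  intro Hr. eapply Rle_trans; [|apply (exp_ge_taylor r j Hr)].
  destruct j. simpl. lra.
  rewrite tech5. assert (0 <= sum_f_R0 (fun k => r ^ k / INR (fact k)) j).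
  { apply cond_pos_sum. intro k. apply Rmult_le_pos. apply pow_le; auto.
    left; apply Rinv_0_lt_compat, INR_fact_lt_0. }
  lra.
Qed.

Lemma cv_big (a : nat -> R) : (forall j, Rabs (a j) <= / INR (fact j)) ->
  forall y, Rbar_lt (Rabs y) (CV_radius a).
Proof.
  intros Ha y. destruct (CV_radius_bounded a) as [Hub _].
  assert (Hr : Rbar_le (Rabs y + 1) (CV_radius a)).
  { apply Hub. exists (exp (Rabs y + 1)). intro j.
    rewrite Rabs_mult, <- RPow_abs. rewrite (Rabs_right (Rabs y + 1)) by (generalize (Rabs_pos y); lra).
    eapply Rle_trans; [|apply term_le_exp; generalize (Rabs_pos y); lra].
    unfold Rdiv. rewrite Rmult_comm. apply Rmult_le_compat_l. apply pow_le. generalize (Rabs_pos y); lra.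
    apply Ha. }
  destruct (CV_radius a); simpl in *; auto; lra.
Qed.

Lemma ak_bound n k j : Rabs (ak n k j) <= / INR (fact j).
Proof.
  unfold ak. destruct (Nat.eqb _ _).
  rewrite Rabs_right. lra. left; apply Rinv_0_lt_compat, INR_fact_lt_0.
  rewrite Rabs_R0. left; apply Rinv_0_lt_compat, INR_fact_lt_0.
Qed.

Lemma g_pseries n k y : (1 <= n)%nat -> (k < n)%nat -> is_pseries (ak n k) y (g n k y).
Proof.
  intros Hn Hk.
  assert (ex : ex_pseries (ak n k) y) by (apply CV_radius_inside, cv_big, ak_bound).
  pose proof (PSeries_correct _ _ ex) as HL.
  set (L := PSeries (ak n k) y) in *.
  replace (g n k y) with L; [exact HL|].
  apply is_pseries_R in HL. set (A := fun j => ak n k j * y ^ j) in HL.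
  unfold g. symmetry. apply is_series_unique.
  set (b := fun p => y ^ (k + p * n) / INR (fact (k + p * n))).
  assert (Z0 : forall m, (m < k)%nat -> sum_f_R0 A m = 0).
  { induction m; intro Hm.
    - simpl. unfold A, ak. rewrite Nat.mod_small by lia.
      destruct (Nat.eqb_spec 0 k); [lia|ring].
    - rewrite tech5, IHm by lia. unfold A, ak. rewrite Nat.mod_small by lia.
      destruct (Nat.eqb_spec (S m) k); [lia|ring]. }
  assert (Ak : forall p, A (k + p * n)%nat = b p).
  { intro p. unfold A, ak, b. rewrite Nat.Div0.mod_add, Nat.mod_small by lia.
    rewrite Nat.eqb_refl. unfold Rdiv. ring. }
  assert (gap : forall p r, (r < n)%nat -> sum_f_R0 A (k + p * n + r) = sum_f_R0 A (k + p * n)).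
  { intros p r. induction r; intro Hr.
    - now rewrite Nat.add_0_r.
    - replace (k + p * n + S r)%nat with (S (k + p * n + r)) by lia.
      rewrite tech5, IHr by lia.
      unfold A, ak. destruct (Nat.eqb_spec (S (k + p * n + r) mod n) k) as [E|E]; [|ring].
      exfalso. pose proof (Nat.div_mod_eq (S (k + p * n + r)) n) as D.
      rewrite E in D. set (q := (S (k + p * n + r) / n)%nat) in D. clearbody q. destruct (Nat.le_gt_cases q p) as [Q|Q]; [assert (n * q <= n * p)%nat by (apply Nat.mul_le_mono_l; auto) | assert (n * (p + 1) <= n * q)%nat by (apply Nat.mul_le_mono_l; lia)]; lia. }
  assert (key : forall p, sum_n b p = sum_n A (k + p * n)).
  { intro p. rewrite !sum_n_Reals. induction p.
    - simpl. rewrite <- Ak. simpl. replace (k + 0)%nat with k by lia.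
      destruct k. reflexivity. rewrite tech5, Z0 by lia. ring.
    - simpl sum_f_R0 at 1. rewrite IHp.
      replace (k + S p * n)%nat with (S (k + p * n + (n - 1))) by lia.
      rewrite tech5, gap by lia.
      rewrite <- Ak. f_equal. f_equal. lia. }
  unfold is_series in *.
  apply (filterlim_ext (fun p => sum_n A (k + p * n))); [intro p; symmetry; apply key|].
  apply (filterlim_comp _ _ _ (fun p => (k + p * n)%nat) (sum_n A) _ eventually); [|exact HL].
  apply eventually_subseq. intro p. nia.
Qed.

Lemma pseries_sum (c : nat -> nat -> R) (L : nat -> R) x m :
  (forall k, (k <= m)%nat -> is_pseries (c k) x (L k)) ->
  is_pseries (fun j => sum_f_R0 (fun k => c k j) m) x (sum_f_R0 L m).
Proof.
  induction m; intro H.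
  - simpl. apply H. lia.
  - simpl. pose proof (is_pseries_plus _ _ _ _ _ (IHm (fun k Hk => H k ltac:(lia))) (H (S m) ltac:(lia))) as P.
    exact P.
Qed.

Lemma exp_pseries c y : is_pseries (fun j => c ^ j / INR (fact j)) y (exp (c * y)).
Proof.
  pose proof (is_exp_Reals (c * y)) as H. apply is_pseries_R in H. apply is_pseries_R.
  revert H. apply is_series_ext. intro j. simpl. rewrite Rpow_mult_distr; unfold Rdiv; ring.
Qed.

Lemma mod_equiv n a N : (1 <= n)%nat -> (a <= N)%nat ->
  (a mod n = (N - a) mod n)%nat <-> exists q, (2 * Z.of_nat a - Z.of_nat N = q * Z.of_nat n)%Z.
Proof.
  intros Hn HaN. split.
  - intro E. pose proof (Nat.div_mod_eq a n) as D1. pose proof (Nat.div_mod_eq (N - a) n) as D2.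
    exists (Z.of_nat (a / n) - Z.of_nat ((N - a) / n))%Z.
    set (q1 := (a / n)%nat) in *. set (q2 := ((N - a) / n)%nat) in *.
    clearbody q1 q2. rewrite <- E in D2. lia.
  - intros [q Hq]. apply Nat2Z.inj. rewrite !Nat2Z.inj_mod.
    rewrite Nat2Z.inj_sub by lia.
    replace (Z.of_nat a) with ((Z.of_nat N - Z.of_nat a) + q * Z.of_nat n)%Z by lia.
    rewrite Z.mod_add by lia. f_equal. lia.
Qed.

Lemma ind_sum x z m u v :
  sum_f_R0 (fun k => (if Nat.eqb x k then u else 0) * (if Nat.eqb z k then v else 0)) m =
  if andb (Nat.eqb x z) (Nat.leb x m) then u * v else 0.
Proof.
  induction m.
  - simpl. destruct (Nat.eqb_spec x 0), (Nat.eqb_spec z 0), (Nat.eqb_spec x z), (Nat.leb_spec x 0); simpl; try lia; ring.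
  - rewrite tech5, IHm.
    destruct (Nat.eqb_spec x z), (Nat.leb_spec x m), (Nat.leb_spec x (S m)), (Nat.eqb_spec x (S m)), (Nat.eqb_spec z (S m)); simpl; try lia; ring.
Qed.

Theorem mainTheorem4 (n : nat) (hn : (2 <= n)%nat) (y : R) :
  sum_f_R0 (fun k => (g n k y) ^ 2) (n - 1) =
  / INR n * sum_f_R0 (fun l => exp (2 * y * cos (2 * PI * INR l / INR n))) (n - 1).
Proof.
  assert (Hn : (1 <= n)%nat) by lia.
  assert (HnR : INR n <> 0) by (apply not_0_INR; lia).
  assert (H1 : is_pseries (fun j => sum_f_R0 (fun k => PS_mult (ak n k) (ak n k) j) (n - 1)) y
                 (sum_f_R0 (fun k => (g n k y) ^ 2) (n - 1))).
  { apply pseries_sum. intros k Hk.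
    replace (g n k y ^ 2) with (g n k y * g n k y) by ring.
    apply is_pseries_mult; try apply g_pseries; try lia; apply cv_big, ak_bound. }
  set (th := fun l : nat => 2 * PI * INR l / INR n).
  assert (H2 : is_pseries (fun j => / INR n * sum_f_R0 (fun l => (2 * cos (th l)) ^ j / INR (fact j)) (n - 1)) y
     (/ INR n * sum_f_R0 (fun l => exp (2 * y * cos (th l))) (n - 1))).
  { assert (H0 : is_pseries (fun j => sum_f_R0 (fun l => (2 * cos (th l)) ^ j / INR (fact j)) (n - 1)) y
     (sum_f_R0 (fun l => exp (2 * y * cos (th l))) (n - 1))).
    { apply pseries_sum. intros l _. replace (2 * y * cos (th l)) with ((2 * cos (th l)) * y) by ring.
      apply exp_pseries. }
    apply (is_pseries_scal (/ INR n)) in H0; [|apply Rmult_comm]. exact H0. }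
  rewrite <- (is_pseries_unique _ _ _ H1). unfold th in H2. rewrite <- (is_pseries_unique _ _ _ H2). fold th.
  apply PSeries_ext. intro N.
  assert (R1 : sum_f_R0 (fun l => (2 * cos (th l)) ^ N / INR (fact N)) (n - 1) =
     sum_f_R0 (fun a => Binomial.C N a / INR (fact N) * sum_f_R0 (fun l => cos ((2 * INR a - INR N) * th l)) (n - 1)) N).
  { rewrite (sum_ext (fun l => (2 * cos (th l)) ^ N / INR (fact N)) (fun l => sum_f_R0 (fun a => Binomial.C N a / INR (fact N) * cos ((2 * INR a - INR N) * th l)) N)).
    2:{ intros l _. rewrite cos_pow. unfold Rdiv. rewrite Rmult_comm, <- sum_scal. apply sum_ext. intros; ring. }
    rewrite sum_swap. apply sum_ext. intros; apply sum_scal. }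
  unfold th in R1. rewrite R1. clear R1.
  unfold PS_mult. rewrite sum_swap.
  rewrite <- sum_scal. apply sum_ext. intros a Ha.
  rewrite (sum_ext _ (fun k => (if Nat.eqb (a mod n) k then / INR (fact a) else 0) *
                               (if Nat.eqb ((N - a) mod n) k then / INR (fact (N - a)) else 0))) by (intros; reflexivity).
  rewrite ind_sum.
  assert (Hlt : (a mod n < n)%nat) by (apply Nat.mod_upper_bound; lia).
  replace (Nat.leb (a mod n) (n - 1)) with true by (symmetry; apply Nat.leb_le; lia).
  rewrite Bool.andb_true_r.
  set (m := (2 * Z.of_nat a - Z.of_nat N)%Z).
  rewrite (sum_ext _ (fun l => cos (IZR m * (2 * PI * INR l / INR n)))).
  2:{ intros l _. f_equal. f_equal. unfold m. rewrite minus_IZR, mult_IZR, <- !INR_IZR_INZ. reflexivity. }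
  assert (FN := INR_fact_neq_0 N). assert (FA := INR_fact_neq_0 a). assert (FNA := INR_fact_neq_0 (N - a)).
  destruct (Nat.eqb_spec (a mod n) ((N - a) mod n)) as [E|E].
  - apply mod_equiv in E; [|lia|lia]. destruct E as [q Hq].
    rewrite (orth_div n m q) by auto.
    unfold Binomial.C. field. auto.
  - rewrite orth_ndiv; auto. ring.
    intros q Hq. apply E. apply (mod_equiv n a N); [lia|lia|]. exists q. exact Hq.
Qed.
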